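(* Let $f:\mathbb{R}^n\to\mathbb{R}\cup\{\infty\}$ be a proper lower semicontinuous function and let $\bar x\in\operatorname{dom} f$. Suppose that $0\in\partial_p f(\bar x)$ and that there exists a real number $c>0$ such that $$\langle z,w\rangle\ge c\|w\|^2\quad\text{for all } w\in\operatorname{dom} D(\partial f)(\bar x|0)\text{ and all } z\in D(\partial f)(\bar x|0)(w).$$ Then $\bar x$ is a strong local minimizer of $f$ with modulus $\kappa$ for every $\kappa\in(0,c)$. Moreover, $$\mathrm{QG}(f;\bar x)\ge \inf\Big\{\frac{\langle z,w\rangle}{\|w\|^2}\ \Big|\ z\in D(\partial f)(\bar x|0)(w),\ w\in\operatorname{dom} D(\partial f)(\bar x|0)\Big\},$$ with the convention $0/0=\infty$.
   Context: For $\Omega\subset\mathbb{R}^N$ and $\bar u\in\Omega$, the tangent (contingent) cone is $T_\Omega(\bar u)=\{v\mid \exists t_k\downarrow0,\ v_k\to v \text{ with } \bar u+t_kv_k\in\Omega\}$. The regular normal cone is $\widehat N_\Omega(\bar u)=T_\Omega(\bar u)^\circ$ (polar cone), and the limiting normal cone $N_\Omega(\bar u)$ is the set of limits of $v_k\in\widehat N_\Omega(u_k)$ with $u_k\to\bar u$, $u_k\in\Omega$. For a proper lsc $f$ and $\bar x\in\operatorname{dom} f$, the limiting subdifferential is $\partial f(\bar x)=\{v\mid (v,-1)\in N_{\operatorname{epi} f}(\bar x,f(\bar x))\}$, and the proximal subdifferential is $\partial_p f(\bar x)=\{v\mid \liminf_{x\to\bar x}\frac{f(x)-f(\bar x)-\langle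 v,x-\bar x\rangle}{\|x-\bar x\|^2}>-\infty\}$. For a set-valued map $F:\mathbb{R}^n\rightrightarrows\mathbb{R}^m$ and $(\bar x,\bar y)\in\operatorname{gph}F$, the graphical derivative is $DF(\bar x|\bar y)(w)=\{z\mid (w,z)\in T_{\operatorname{gph}F}(\bar x,\bar y)\}$; the subgradient graphical derivative is $D(\partial f)(\bar x|\bar v)$, and $\operatorname{dom} D(\partial f)(\bar x|0)=\{w\mid D(\partial f)(\bar x|0)(w)\ne\emptyset\}$. A point $\bar x\in\operatorname{dom} f$ is a strong local minimizer of $f$ with modulus $\kappa>0$ if there is $\gamma>0$ with $f(x)-f(\bar x)\ge\frac{\kappa}{2}\|x-\bar x\|^2$ for all $x$ with $\|x-\bar x\|\le\gamma$ (the quadratic growth condition). $\mathrm{QG}(f;\bar x)$ denotes the supremum of all $\kappa>0$ such that $\bar x$ is a strong local minimizer of $f$ with modulus $\kappa$. *)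

(* Defs.v *)
From Stdlib Require Import Reals.
From mathcomp Require Import ssreflect ssrfun ssrbool eqtype ssrnat seq fintype bigop.
Set Implicit Arguments.
Unset Strict Implicit.
Local Open Scope R_scope.

Definition vec (n : nat) := 'I_n -> R.
Definition vzero (n : nat) : vec n := fun _ => 0.
Definition vadd n (u v : vec n) : vec n := fun i => u i + v i.
Definition vsub n (u v : vec n) : vec n := fun i => u i - v i.
Definition vscale n (a : R) (u : vec n) : vec n := fun i => a * u i.
Definition inner n (u v : vec n) : R := \big[Rplus/0]_(i < n) (u i * v i).
Definition vnorm n (u : vec n) : R := sqrt (inner u u).

Definition vcat n m (u : vec n) (v : vec m) : vec (n + m) :=
  fun i => match split i with inl j => u j | inr k => v k end.
Definition vfst n m (p : vec (n + m)) : vec n := fun j => p (lshift m j).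
Definition vsnd n m (p : vec (n + m)) : vec m := fun k => p (rshift n k).
Definition sca (a : R) : vec 1 := fun _ => a.

Definition vcv n (u : nat -> vec n) (l : vec n) : Prop :=
  forall eps, 0 < eps -> exists N : nat, forall k : nat, (N <= k)%coq_nat ->
    vnorm (vsub (u k) l) < eps.

Definition tangent_cone n (Om : vec n -> Prop) (ub : vec n) (v : vec n) : Prop :=
  exists (t : nat -> R) (vk : nat -> vec n),
    (forall k, 0 < t k) /\ Un_decreasing t /\ Un_cv t 0 /\ vcv vk v /\
    (forall k, Om (vadd ub (vscale (t k) (vk k)))).
Definition reg_normal_cone n (Om : vec n -> Prop) (ub : vec n) (y : vec n) : Prop :=
  forall v, tangent_cone Om ub v -> inner y v <= 0.
Definition lim_normal_cone n (Om : vec n -> Prop) (ub : vec n) (y : vec n) : Prop :=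
  exists (uk : nat -> vec n) (yk : nat -> vec n),
    (forall k, Om (uk k)) /\ vcv uk ub /\ vcv yk y /\
    (forall k, reg_normal_cone Om (uk k) (yk k)).

Inductive ereal : Type := EFin (r : R) | EPInf | EMInf.
Definition ele (a b : ereal) : Prop :=
  match a, b with
  | EMInf, _ => True
  | _, EPInf => True
  | EFin x, EFin y => x <= y
  | _, _ => False
  end.
Definition elt (a b : ereal) : Prop := ele a b /\ a <> b.
Definition eaddr (e : ereal) (r : R) : ereal :=
  match e with EFin a => EFin (a + r) | _ => e end.

Definition is_sup (S : ereal -> Prop) (s : ereal) : Prop :=
  (forall e, S e -> ele e s) /\ (forall s', (forall e, S e -> ele e s') -> ele s s').
Definition is_inf (S : ereal -> Prop) (s : ereal) : Prop :=
  (forall e, S e -> ele s e) /\ (forall s', (forall e, S e -> ele s' e) -> ele s' s).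

Definition in_dom n (f : vec n -> ereal) (x : vec n) : Prop := exists r, f x = EFin r.
Definition proper n (f : vec n -> ereal) : Prop :=
  (forall x, f x <> EMInf) /\ (exists x, f x <> EPInf).
Definition lsc n (f : vec n -> ereal) : Prop :=
  forall (x : vec n) (r : R), elt (EFin r) (f x) ->
    exists delta, 0 < delta /\
      forall y, vnorm (vsub y x) < delta -> elt (EFin r) (f y).

Definition epi n (f : vec n -> ereal) (p : vec (n + 1)) : Prop :=
  ele (f (vfst p)) (EFin (vsnd p ord0)).

Definition subdiff n (f : vec n -> ereal) (x v : vec n) : Prop :=
  exists r, f x = EFin r /\
    lim_normal_cone (epi f) (vcat x (sca r)) (vcat v (sca (-1))).

(* proximal subdifferential:
   liminf_{x -> xb} (f x - f xb - <v, x - xb>) / |x - xb|^2 > -oo,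
   i.e. the quotient is bounded below by some M on a punctured neighbourhood. *)
Definition prox_subdiff n (f : vec n -> ereal) (xb v : vec n) : Prop :=
  in_dom f xb /\
  exists (M delta : R), 0 < delta /\
    forall x, 0 < vnorm (vsub x xb) < delta ->
      ele (eaddr (f xb) (inner v (vsub x xb) + M * (vnorm (vsub x xb))^2)) (f x).

Definition gph_subdiff n (f : vec n -> ereal) (p : vec (n + n)) : Prop :=
  subdiff f (vfst p) (vsnd p).

Definition gderiv_subdiff n (f : vec n -> ereal) (xb vb w z : vec n) : Prop :=
  tangent_cone (gph_subdiff f) (vcat xb vb) (vcat w z).
Definition dom_gderiv_subdiff n (f : vec n -> ereal) (xb vb w : vec n) : Prop :=
  exists z, gderiv_subdiff f xb vb w z.

Definition strong_local_min n (f : vec n -> ereal) (xb : vec n) (kappa : R) : Prop :=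
  0 < kappa /\ in_dom f xb /\
  exists gamma, 0 < gamma /\
    forall x, vnorm (vsub x xb) <= gamma ->
      ele (eaddr (f xb) (kappa / 2 * (vnorm (vsub x xb))^2)) (f x).

(* QG(f; xb) is the supremum of this set *)
Definition QG_set n (f : vec n -> ereal) (xb : vec n) (e : ereal) : Prop :=
  exists kappa, e = EFin kappa /\ 0 < kappa /\ strong_local_min f xb kappa.

(* <z,w>/|w|^2 with the convention 0/0 = +oo (w = 0 forces <z,w> = 0) *)
Definition quot n (z w : vec n) : ereal :=
  match Req_dec_T (vnorm w) 0 with
  | left _ => EPInf
  | right _ => EFin (inner z w / (vnorm w)^2)
  end.
Definition curv_set n (f : vec n -> ereal) (xb : vec n) (e : ereal) : Prop :=
  exists w z, dom_gderiv_subdiff f xb (@vzero n) w /\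
    gderiv_subdiff f xb (@vzero n) w z /\ e = quot z w.

(* Main.v *)
Require Import Defs.
From Stdlib Require Import Reals.
Local Open Scope R_scope.
From Stdlib Require Import Lra Lia Rtopology FunctionalExtensionality IndefiniteDescription Classical.
From HB Require Import structures.
From mathcomp Require Import ssreflect ssrfun ssrbool eqtype ssrnat seq fintype bigop.
From mathcomp Require Import zify.
Local Open Scope R_scope.

Lemma Rplus_assoc' : associative Rplus. Proof. by move=> *; rewrite Rplus_assoc. Qed.
HB.instance Definition _ := Monoid.isComLaw.Build R 0 Rplus Rplus_assoc' Rplus_comm Rplus_0_l.

Section Sums.
Variable n : nat.
Implicit Types F G : 'I_n -> R.

Lemma sum_add F G : \big[Rplus/0]_(i < n) (F i + G i) = \big[Rplus/0]_(i < n) F i + \big[Rplus/0]_(i < n) G i.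
Proof. by rewrite big_split. Qed.

Lemma sum_scal c F : c * \big[Rplus/0]_(i < n) F i = \big[Rplus/0]_(i < n) (c * F i).
Proof.
elim/big_rec2: _ => [|i y1 y2 _ <-]; first by rewrite Rmult_0_r.
by rewrite Rmult_plus_distr_l.
Qed.

Lemma sum_le F G : (forall i, F i <= G i) -> \big[Rplus/0]_(i < n) F i <= \big[Rplus/0]_(i < n) G i.
Proof.
move=> H; elim/big_rec2: _ => [|i y1 y2 _ Hy]; first lra.
by apply Rplus_le_compat.
Qed.

Lemma sum_ge0 F : (forall i, 0 <= F i) -> 0 <= \big[Rplus/0]_(i < n) F i.
Proof.
move=> H; elim/big_rec: _ => [|i y _ Hy]; first lra.
by apply Rplus_le_le_0_compat.
Qed.

Lemma sum_0 : \big[Rplus/0]_(i < n) 0 = 0.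
Proof. by rewrite big1. Qed.

Lemma sum_term_le F j : (forall i, 0 <= F i) -> F j <= \big[Rplus/0]_(i < n) F i.
Proof.
move=> H; rewrite (bigD1 j) //=.
have : 0 <= \big[Rplus/0]_(i < n | i != j) F i.
  elim/big_rec: _ => [|i y _ Hy]; first lra.
  by apply Rplus_le_le_0_compat.
move=> Hs; apply: (Rle_trans _ (F j + 0)); [lra| apply Rplus_le_compat_l; exact Hs].
Qed.

Lemma Un_cv_ext (u v : nat -> R) l : (forall k, u k = v k) -> Un_cv u l -> Un_cv v l.
Proof. move=> E H eps He; case: (H eps He) => N HN; exists N => k Hk; rewrite -E; auto. Qed.

Lemma sum_cv (F : nat -> 'I_n -> R) (l : 'I_n -> R) :
  (forall i, Un_cv (fun k => F k i) (l i)) ->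
  Un_cv (fun k => \big[Rplus/0]_(i < n) F k i) (\big[Rplus/0]_(i < n) l i).
Proof.
move=> H.
have G : forall r : seq 'I_n, Un_cv (fun k => \big[Rplus/0]_(i <- r) F k i) (\big[Rplus/0]_(i <- r) l i).
  elim => [|i r IH].
    apply: (@Un_cv_ext (fun _ => 0)) => [k|]; first by rewrite big_nil.
    rewrite big_nil => eps He; exists 0%nat => k _; rewrite /R_dist Rminus_0_r Rabs_R0; lra.
  apply: (@Un_cv_ext (fun k => F k i + \big[Rplus/0]_(j <- r) F k j)) => [k|].
    by rewrite big_cons.
  rewrite big_cons; by apply CV_plus.
exact: G.
Qed.
End Sums.

Section Vec.
Variable n : nat.
Implicit Types u v w : vec n.

Lemma inner_sym u v : inner u v = inner v u.
Proof. by apply: eq_bigr => i _; rewrite Rmult_comm. Qed.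

Lemma inner_add_l u v w : inner (vadd u v) w = inner u w + inner v w.
Proof. rewrite /inner -sum_add; apply: eq_bigr => i _; rewrite /vadd; ring. Qed.

Lemma inner_sub_l u v w : inner (vsub u v) w = inner u w - inner v w.
Proof.
rewrite /inner. have -> : \big[Rplus/0]_(i < n) (vsub u v i * w i) = \big[Rplus/0]_(i < n) (u i * w i + (-1) * (v i * w i)).
  by apply: eq_bigr => i _; rewrite /vsub; ring.
rewrite sum_add -sum_scal; ring.
Qed.

Lemma inner_scale_l t u v : inner (vscale t u) v = t * inner u v.
Proof. rewrite /inner sum_scal; apply: eq_bigr => i _; rewrite /vscale; ring. Qed.

Lemma inner_zero_l v : inner (@vzero n) v = 0.
Proof. rewrite /inner; apply: big1 => i _; rewrite /vzero; ring. Qed.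

Lemma inner_ge0 u : 0 <= inner u u.
Proof. apply: sum_ge0 => i; apply: Rle_0_sqr. Qed.

Lemma coord_sq u i : u i * u i <= inner u u.
Proof. apply: (@sum_term_le n (fun i => u i * u i) i) => j; apply: Rle_0_sqr. Qed.

Lemma vnorm_sq u : vnorm u ^ 2 = inner u u.
Proof. by rewrite /vnorm pow2_sqrt //; apply: inner_ge0. Qed.

Lemma vnorm_ge0 u : 0 <= vnorm u.
Proof. apply: sqrt_pos. Qed.

Lemma coord_le_norm u i : Rabs (u i) <= vnorm u.
Proof. rewrite -sqrt_Rsqr_abs /vnorm; apply: sqrt_le_1_alt; apply: coord_sq. Qed.

Lemma inner_eq0 u : inner u u = 0 -> forall i, u i = 0.
Proof. move=> H i; have := coord_sq u i; rewrite H => Hi.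
have := Rle_0_sqr (u i); rewrite /Rsqr => H2. nra. Qed.

End Vec.
Arguments inner_sym {n}.
Arguments inner_add_l {n}.
Arguments inner_sub_l {n}.
Arguments inner_scale_l {n}.
Arguments inner_zero_l {n}.
Arguments inner_ge0 {n}.
Arguments coord_sq {n}.
Arguments vnorm_sq {n}.
Arguments vnorm_ge0 {n}.
Arguments coord_le_norm {n}.
Arguments inner_eq0 {n}.

Lemma vcat_l n m (a : vec n) (b : vec m) j : vcat a b (lshift m j) = a j.
Proof.
rewrite /vcat. have -> : split (lshift m j) = inl j by rewrite -[lshift m j]/(unsplit (inl j)) unsplitK.
done.
Qed.

Lemma vcat_r n m (a : vec n) (b : vec m) k : vcat a b (rshift n k) = b k.
Proof.
rewrite /vcat. have -> : split (rshift n k) = inr k by rewrite -[rshift n k]/(unsplit (inr k)) unsplitK.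
done.
Qed.

Lemma inner_split n m (p q : vec (n + m)) : inner p q = inner (vfst p) (vfst q) + inner (vsnd p) (vsnd q).
Proof. by rewrite /inner big_split_ord. Qed.

Lemma vfst_vcat n m (a : vec n) (b : vec m) : vfst (vcat a b) = a.
Proof. apply: functional_extensionality => j; apply: vcat_l. Qed.
Lemma vsnd_vcat n m (a : vec n) (b : vec m) : vsnd (vcat a b) = b.
Proof. apply: functional_extensionality => j; apply: vcat_r. Qed.

Lemma inner_1 (p q : vec 1) : inner p q = p ord0 * q ord0.
Proof. by rewrite /inner big_ord1. Qed.

Lemma cv_const c : Un_cv (fun _ => c) c.
Proof. move=> eps He; exists 0%nat => k _; rewrite /R_dist Rminus_diag_eq // Rabs_R0; lra. Qed.

Lemma cv_le_ev (a b : nat -> R) la lb : Un_cv a la -> Un_cv b lb ->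
  (exists N, forall k, (N <= k)%coq_nat -> a k <= b k) -> la <= lb.
Proof.
move=> Ha Hb [N HN]. apply: Rnot_lt_le => Hlt.
have He : 0 < (la - lb) / 2 by lra.
case: (Ha _ He) => N1 H1; case: (Hb _ He) => N2 H2.
set k := (N + N1 + N2)%coq_nat.
have := H1 k ltac:(rewrite /k; lia); have := H2 k ltac:(rewrite /k; lia); have := HN k ltac:(rewrite /k; lia).
rewrite /R_dist => h0 h1 h2. split_Rabs; lra.
Qed.

Lemma vcv_coord n (u : nat -> vec n) l : vcv u l -> forall i, Un_cv (fun k => u k i) (l i).
Proof.
move=> H i eps He; case: (H eps He) => N HN; exists N => k Hk.
have h := HN k Hk; have h2 : Rabs (u k i - l i) <= vnorm (vsub (u k) l) := coord_le_norm (vsub (u k) l) i.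
rewrite /R_dist /=; lra.
Qed.

Lemma coord_vcv n (u : nat -> vec n) l : (forall i, Un_cv (fun k => u k i) (l i)) -> vcv u l.
Proof.
move=> H.
have Hs : Un_cv (fun k => inner (vsub (u k) l) (vsub (u k) l)) 0.
  have := @sum_cv n (fun k i => vsub (u k) l i * vsub (u k) l i) (fun _ => 0).
  rewrite sum_0; apply => i.
  have -> : 0 = (l i - l i) * (l i - l i) by ring.
  apply: CV_mult; apply: CV_minus => //; apply: cv_const.
move=> eps He; have He2 : 0 < eps * eps by nra.
case: (Hs _ He2) => N HN; exists N => k Hk.
have := HN k Hk; rewrite /R_dist Rminus_0_r => h.
have h0 := inner_ge0 (vsub (u k) l).
rewrite Rabs_right in h; last lra.
rewrite /vnorm -(sqrt_Rsqr eps); last lra.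
apply: sqrt_lt_1_alt; rewrite /Rsqr; lra.
Qed.

Definition incr (phi : nat -> nat) := forall k, (phi k < phi (S k))%coq_nat.

Lemma incr_ge phi : incr phi -> forall k, (k <= phi k)%coq_nat.
Proof. move=> H; elim => [|k IH]; first lia. have := H k; lia. Qed.

Lemma incr_mono phi : incr phi -> forall m k, (m <= k)%coq_nat -> (phi m <= phi k)%coq_nat.
Proof.
move=> H m k Hmk; elim: k Hmk => [|k IH] Hmk; first by have -> : m = 0%nat by lia.
case: (Nat.eq_dec m (S k)) => [->|Hne]; first lia.
have := IH ltac:(lia); have := H k; lia.
Qed.

Lemma incr_comp phi psi : incr phi -> incr psi -> incr (fun k => phi (psi k)).
Proof. move=> H1 H2 k; have := H1 (psi k).
have := @incr_mono phi H1 (S (psi k)) (psi (S k)) ltac:(have := H2 k; lia); lia. Qed.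

Lemma cv_subseq u l phi : Un_cv u l -> incr phi -> Un_cv (fun k => u (phi k)) l.
Proof.
move=> H Hp eps He; case: (H eps He) => N HN; exists N => k Hk; apply: HN.
have := @incr_ge phi Hp k; rewrite /ge in Hk *; lia.
Qed.

Definition seqsel (sel : nat -> nat -> nat) : nat -> nat :=
  fix g k := match k with 0%nat => sel 0%nat 0%nat | S k' => sel (S (g k')) (S k') end.

Lemma BW1 (u : nat -> R) B : (forall k, Rabs (u k) <= B) ->
  exists phi l, incr phi /\ Un_cv (fun k => u (phi k)) l.
Proof.
move=> HB.
have [l Hl] := @Bolzano_Weierstrass u _ (compact_P3 (-B) B) (fun k => ltac:(have := HB k; split_Rabs; lra)).
have claim : forall N k : nat, exists p : nat, (N <= p)%coq_nat /\ Rabs (u p - l) < / INR (S k).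
  move=> N k.
  have hpos : 0 < / INR (S k) by apply: Rinv_0_lt_compat; apply: lt_0_INR; lia.
  have [p [Hp1 Hp2]] := Hl (disc l (mkposreal _ hpos)) N ltac:(exists (mkposreal _ hpos) => y; done).
  by exists p; split.
pose sel N k := proj1_sig (constructive_indefinite_description _ (claim N k)).
have Hsel : forall N k, (N <= sel N k)%coq_nat /\ Rabs (u (sel N k) - l) < / INR (S k).
  move=> N k; exact: (proj2_sig (constructive_indefinite_description _ (claim N k))).
exists (seqsel sel), l; split.
  move=> k /=; have := (Hsel (S (seqsel sel k)) (S k)).1; lia.
have Hd : forall k, Rabs (u (seqsel sel k) - l) < / INR (S k).
  by case => [|k] /=; apply Hsel.
move=> eps He; have [N [HN1 HN2]] := archimed_cor1 eps He; exists N => k Hk.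
rewrite /R_dist; apply: (Rlt_le_trans _ _ _ (Hd k)).
apply: (Rle_trans _ (/ INR N)); last exact: (Rlt_le _ _ HN1).
apply: Rinv_le_contravar; first by apply: lt_0_INR; lia.
apply: le_INR; rewrite /ge in Hk; lia.
Qed.

Lemma BW_family (I : eqType) (F : I -> nat -> R) B : (forall i k, Rabs (F i k) <= B) ->
  forall r : seq I, exists phi, incr phi /\ forall i, i \in r -> exists l, Un_cv (fun k => F i (phi k)) l.
Proof.
move=> HB; elim => [|j r [phi [Hphi IH]]].
  by exists id; split => // k /=; lia.
have [psi [l [Hpsi Hl]]] := @BW1 (fun k => F j (phi k)) B (fun k => HB j (phi k)).
exists (fun k => phi (psi k)); split; first exact: incr_comp.
move=> i; rewrite in_cons => /orP [/eqP ->|Hi]; first by exists l.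
have [l' Hl'] := IH i Hi; exists l'; exact: (@cv_subseq (fun k => F i (phi k))).
Qed.

Lemma BW_fin (T : finType) (F : T -> nat -> R) B : (forall i k, Rabs (F i k) <= B) ->
  exists phi (l : T -> R), incr phi /\ forall i, Un_cv (fun k => F i (phi k)) (l i).
Proof.
move=> HB; have [phi [Hphi H]] := @BW_family T F B HB (index_enum T).
pose l i := proj1_sig (constructive_indefinite_description _ (H i (mem_index_enum i))).
exists phi, l; split => // i.
exact: (proj2_sig (constructive_indefinite_description _ (H i (mem_index_enum i)))).
Qed.

Definition sq n (d : vec n) := inner d d.
Arguments sq {n}.

Lemma sq_ge0 n (d : vec n) : 0 <= sq d.
Proof. exact: inner_ge0. Qed.
Arguments sq_ge0 {n}.

Lemma sq_cv n (yk : nat -> vec n) (y xb : vec n) : (forall i, Un_cv (fun k => yk k i) (y i)) ->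
  Un_cv (fun k => sq (vsub (yk k) xb)) (sq (vsub y xb)).
Proof.
move=> H; apply: (@sum_cv n (fun k i => vsub (yk k) xb i * vsub (yk k) xb i) (fun i => vsub y xb i * vsub y xb i)) => i.
apply: CV_mult; apply: CV_minus => //; apply: cv_const.
Qed.

Lemma inv_small (e : R) : 0 < e -> exists N, forall k, (N <= k)%coq_nat -> / INR (S k) < e.
Proof.
move=> He; have [N [HN1 HN2]] := archimed_cor1 e He; exists N => k Hk.
apply: Rle_lt_trans HN1; apply: Rinv_le_contravar; first by apply: lt_0_INR; lia.
apply: le_INR; lia.
Qed.

Lemma min_exists n (f : vec n -> ereal) (h : vec n -> R) (xb : vec n) (R0 B : R) :
  (forall x, f x <> EMInf) -> lsc f ->
  (forall (yk : nat -> vec n) y, (forall i, Un_cv (fun k => yk k i) (y i)) -> Un_cv (fun k => h (yk k)) (h y)) ->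
  (forall y fy, sq (vsub y xb) <= R0 -> f y = EFin fy -> B <= fy + h y) ->
  (exists y fy, sq (vsub y xb) <= R0 /\ f y = EFin fy) ->
  exists u fu, sq (vsub u xb) <= R0 /\ f u = EFin fu /\
    forall y fy, sq (vsub y xb) <= R0 -> f y = EFin fy -> fu + h u <= fy + h y.
Proof.
move=> Hprop Hlsc Hh HB [y0 [fy0 [Hy0 Hfy0]]].
pose E v := exists y fy, sq (vsub y xb) <= R0 /\ f y = EFin fy /\ v = - (fy + h y).
have Eb : bound E.
  exists (- B) => v [y [fy [H1 [H2 ->]]]]; have := HB y fy H1 H2; lra.
have Ene : exists v, E v by exists (- (fy0 + h y0)), y0, fy0.
have [M [HM1 HM2]] := completeness E Eb Ene.
pose m := - M.
have Hlow : forall y fy, sq (vsub y xb) <= R0 -> f y = EFin fy -> m <= fy + h y.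
  move=> y fy H1 H2; have := HM1 (- (fy + h y)) ltac:(by exists y, fy); rewrite /m; lra.
have approx : forall k : nat, exists y, sq (vsub y xb) <= R0 /\ exists fy, f y = EFin fy /\ fy + h y < m + / INR (S k).
  move=> k; have hpos : 0 < / INR (S k) by apply: Rinv_0_lt_compat; apply: lt_0_INR; lia.
  case: (classic (exists y, sq (vsub y xb) <= R0 /\ exists fy, f y = EFin fy /\ fy + h y < m + / INR (S k))) => // Hno.
  exfalso.
  have : M <= M - / INR (S k); last lra.
  apply: HM2 => v [y [fy [H1 [H2 ->]]]].
  apply: Rnot_lt_le => Hlt; apply: Hno; exists y; split => //; exists fy; split => //; rewrite /m; lra.
pose yk k := proj1_sig (constructive_indefinite_description _ (approx k)).
have Hyk : forall k, sq (vsub (yk k) xb) <= R0 /\ exists fy, f (yk k) = EFin fy /\ fy + h (yk k) < m + / INR (S k).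
  move=> k; exact: (proj2_sig (constructive_indefinite_description _ (approx k))).
have HR0 : 0 <= R0 by have := sq_ge0 (vsub y0 xb); lra.
have [phi [l [Hphi Hl]]] := @BW_fin _ (fun i k => yk k i - xb i) (sqrt R0) (fun i k =>
   Rle_trans _ _ _ (coord_le_norm (vsub (yk k) xb) i) (sqrt_le_1_alt _ _ (Hyk k).1)).
pose u i := xb i + l i.
have Hcu : forall i, Un_cv (fun k => yk (phi k) i) (u i).
  move=> i; apply: (@Un_cv_ext (fun k => xb i + (yk (phi k) i - xb i))) => [k|]; first ring.
  apply: CV_plus => //; apply: cv_const.
have Hsu : sq (vsub u xb) <= R0.
  apply: (@Rle_cv_lim (fun k => sq (vsub (yk (phi k)) xb)) (fun _ => R0)) => [k||]; first exact: (Hyk (phi k)).1.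
    exact: (@sq_cv n _ _ xb Hcu).
  exact: cv_const.
have Hvcv := @coord_vcv n _ _ Hcu.
have Hhu := Hh _ _ Hcu.
have Hele : ele (f u) (EFin (m - h u)).
  apply: NNPP => Hn.
  have [r [Hr1 Hr2]] : exists r, m - h u < r /\ elt (EFin r) (f u).
    move: Hn (Hprop u); case: (f u) => [a| |] /= Hn Hp.
    - exists ((a + (m - h u)) / 2); split; first lra.
      split; first (simpl; lra). case; lra.
    - exists (m - h u + 1); split; first lra. by split.
    - by exfalso; apply: Hp.
  have [d [Hd1 Hd2]] := Hlsc u r Hr2.
  have He : 0 < (r - (m - h u)) / 2 by lra.
  have [N1 HN1] := Hvcv d Hd1.
  have [N2 HN2] := Hhu _ He.
  have [N3 HN3] := @inv_small _ He.
  set k := (N1 + N2 + N3)%coq_nat.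
  have h1 := HN1 k ltac:(rewrite /k; lia).
  have h2 := HN2 k ltac:(rewrite /k; lia).
  have h3 := HN3 (phi k) ltac:(have := @incr_ge phi Hphi k; rewrite /k; lia).
  have [_ [fy [Hfy Hfy2]]] := Hyk (phi k).
  have := Hd2 _ h1; rewrite Hfy => -[/= Hr3 Hr4].
  rewrite /R_dist in h2; have [h2a h2b] := Rabs_def2 _ _ h2.
  have h2c : - ((r - (m - h u)) / 2) < h (yk (phi k)) - h u := h2b.
  lra.
move: Hele (Hprop u); case Efu: (f u) => [fu| |] //= Hle _.
exists u, fu; split => //; split => // y fy H1 H2.
have := Hlow y fy H1 H2; lra.
Qed.

Lemma pen_ineq a s s' : Rmax 0 (s' - a) * Rmax 0 (s' - a) <=
  Rmax 0 (s - a) * Rmax 0 (s - a) + 2 * Rmax 0 (s - a) * (s' - s) + (s' - s) * (s' - s).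
Proof. rewrite /Rmax; case: Rle_dec => H1; case: Rle_dec => H2.
- nra.
- have : (s' - a) * (s' - a) <= (s' - s) * (s' - s) by apply: Rmult_le_compat; lra.
  lra.
- have : 0 <= (s - a) * (s - a) + 2 * (s - a) * (s' - s) + (s' - s) * (s' - s).
    have -> : (s - a) * (s - a) + 2 * (s - a) * (s' - s) + (s' - s) * (s' - s) = (s' - a) * (s' - a) by ring.
    nra.
  lra.
- have := Rle_0_sqr (s' - s); rewrite /Rsqr; lra.
Qed.

Lemma inner_add_r n (u v w : vec n) : inner u (vadd v w) = inner u v + inner u w.
Proof. by rewrite inner_sym inner_add_l inner_sym (inner_sym w). Qed.
Lemma inner_scale_r n t (u v : vec n) : inner u (vscale t v) = t * inner u v.
Proof. by rewrite inner_sym inner_scale_l inner_sym. Qed.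

Lemma sq_expand n (u d xb : vec n) t :
  sq (vsub (vadd u (vscale t d)) xb) = sq (vsub u xb) + (2 * t * inner (vsub u xb) d + t * t * sq d).
Proof.
have -> : vsub (vadd u (vscale t d)) xb = vadd (vsub u xb) (vscale t d).
  apply: functional_extensionality => i; rewrite /vsub /vadd /vscale; ring.
move: (vsub u xb) => e.
rewrite /sq !inner_add_l !inner_add_r !inner_scale_l !inner_scale_r (inner_sym d e); ring.
Qed.

Lemma alg_id (t b k1 A P i sd : R) :
  t * (b - (k1 - 4 * A * P) * i + t * (- (k1 / 2) * sd + A * (2 * P * sd + (2 * i + t * sd) * (2 * i + t * sd)))) =
  t * b - k1 / 2 * (2 * t * i + t * t * sd) + (A * (P * P + 2 * P * (2 * t * i + t * t * sd) + (2 * t * i + t * t * sd) * (2 * t * i + t * t * sd)) - A * (P * P)).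
Proof. field. Qed.

Definition hfun n (k1 A a : R) (xb y : vec n) :=
  - (k1 / 2) * sq (vsub y xb) + A * (Rmax 0 (sq (vsub y xb) - a) * Rmax 0 (sq (vsub y xb) - a)).

Arguments hfun {n}.

Lemma vcv_const n (v : vec n) : vcv (fun _ => v) v.
Proof.
move=> eps He; exists 0%nat => k _.
have -> : vnorm (vsub v v) = 0.
  rewrite /vnorm /inner big1 ?sqrt_0 // => i _; rewrite /vsub; ring.
lra.
Qed.

Lemma inner_cv n (g : vec n) (dk : nat -> vec n) d : (forall i, Un_cv (fun k => dk k i) (d i)) ->
  Un_cv (fun k => inner g (dk k)) (inner g d).
Proof.
move=> H; apply: (@sum_cv n (fun k i => g i * dk k i) (fun i => g i * d i)) => i.
apply: CV_mult => //; apply: cv_const.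
Qed.

Lemma sqv_cv n (dk : nat -> vec n) d : (forall i, Un_cv (fun k => dk k i) (d i)) ->
  Un_cv (fun k => sq (dk k)) (sq d).
Proof.
move=> H; apply: (@sum_cv n (fun k i => dk k i * dk k i) (fun i => d i * d i)) => i.
by apply: CV_mult.
Qed.

Arguments inner_cv {n} g {dk d}.
Arguments sqv_cv {n dk d}.
Arguments vcv_const {n}.

Lemma fermat n (f : vec n -> ereal) (xb : vec n) (k1 A a R0 : R) (u : vec n) (fu : R) :
  (forall x, f x <> EMInf) -> 0 <= A -> f u = EFin fu -> sq (vsub u xb) < R0 ->
  (forall y fy, sq (vsub y xb) <= R0 -> f y = EFin fy -> fu + hfun k1 A a xb u <= fy + hfun k1 A a xb y) ->
  subdiff f u (vscale (k1 - 4 * A * Rmax 0 (sq (vsub u xb) - a)) (vsub u xb)).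
Proof.
move=> Hprop HA Hfu Hint Hmin.
set e := vsub u xb. set s := sq e. set P := Rmax 0 (s - a). set lam := k1 - 4 * A * P.
set g := vscale lam e.
exists fu; split => //.
exists (fun _ => vcat u (sca fu)), (fun _ => vcat g (sca (-1))); split; [|split; [|split]].
- move=> k; rewrite /epi vfst_vcat vsnd_vcat Hfu /sca /=; lra.
- exact: vcv_const.
- exact: vcv_const.
move=> k V [t [vk [Ht [Hdec [Htc [Hvk Hepi]]]]]].
rewrite inner_split vfst_vcat vsnd_vcat inner_1 /sca.
pose dk k := vfst (vk k). pose bk k := vsnd (vk k) ord0.
have Hc := @vcv_coord _ _ _ Hvk.
have Hd : forall i, Un_cv (fun k => dk k i) (vfst V i) by move=> i; exact: (Hc (lshift 1 i)).
have Hb : Un_cv bk (vsnd V ord0) by exact: (Hc (rshift n ord0)).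
pose Q k := - (k1 / 2) * sq (dk k) + A * (2 * P * sq (dk k) + (2 * inner e (dk k) + t k * sq (dk k)) * (2 * inner e (dk k) + t k * sq (dk k))).
have HQ : Un_cv Q (- (k1 / 2) * sq (vfst V) + A * (2 * P * sq (vfst V) + (2 * inner e (vfst V) + 0 * sq (vfst V)) * (2 * inner e (vfst V) + 0 * sq (vfst V)))).
  have Hs := sqv_cv Hd. have Hi := inner_cv e Hd.
  apply: CV_plus; first by apply: CV_mult => //; apply: cv_const.
  apply: CV_mult; first exact: cv_const.
  apply: CV_plus; first by apply: CV_mult => //; apply: cv_const.
  apply: CV_mult; apply: CV_plus; try (apply: CV_mult => //; apply: cv_const); apply: CV_mult => //.
have Hy : forall k, vfst (vadd (vcat u (sca fu)) (vscale (t k) (vk k))) = vadd u (vscale (t k) (dk k)).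
  move=> k'; apply: functional_extensionality => j; rewrite /vfst /vadd /vscale vcat_l //.
have Hy2 : forall k, vsnd (vadd (vcat u (sca fu)) (vscale (t k) (vk k))) ord0 = fu + t k * bk k.
  move=> k'; rewrite /vsnd /vadd /vscale vcat_r //.
have HS : Un_cv (fun k => sq (vsub (vadd u (vscale (t k) (dk k))) xb)) (s + 2 * 0 * inner e (vfst V) + 0 * 0 * sq (vfst V)).
  apply: (@Un_cv_ext (fun k => s + (2 * t k * inner e (dk k) + t k * t k * sq (dk k)))) => [k'|].
    by rewrite sq_expand.
  have Hs := sqv_cv Hd. have Hi := inner_cv e Hd.
  have -> : s + 2 * 0 * inner e (vfst V) + 0 * 0 * sq (vfst V) = s + (2 * 0 * inner e (vfst V) + 0 * 0 * sq (vfst V)) by ring.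
  apply: CV_plus; first exact: cv_const.
  apply: CV_plus.
  - apply: CV_mult => //; apply: CV_mult => //; apply: cv_const.
  - apply: CV_mult => //; apply: CV_mult => //.
have Hgd := inner_cv g Hd.
have : inner g (vfst V) + -1 * vsnd V ord0 <= 0 * (- (k1 / 2) * sq (vfst V) + A * (2 * P * sq (vfst V) + (2 * inner e (vfst V) + 0 * sq (vfst V)) * (2 * inner e (vfst V) + 0 * sq (vfst V)))).
  apply: (@cv_le_ev (fun k => inner g (dk k) + -1 * bk k) (fun k => t k * Q k)).
  - apply: CV_plus => //; apply: CV_mult => //; apply: cv_const.
  - exact: CV_mult.
  have He : 0 < R0 - s by rewrite /s /e; lra.
  have [N HN] := HS _ He; exists N => k' Hk.
  have := HN k' Hk; rewrite /R_dist => Habs.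
  have Hin : sq (vsub (vadd u (vscale (t k') (dk k'))) xb) <= R0.
    have [h1 h2] := Rabs_def2 _ _ Habs; lra.
  have := Hepi k'; rewrite /epi Hy Hy2.
  move: (Hprop (vadd u (vscale (t k') (dk k')))).
  case Efy: (f _) => [fy| |] //= _ Hfy.
  have Hm := Hmin _ _ Hin Efy.
  move: Hm; rewrite /hfun sq_expand -/e -/s -/P.
  set D := 2 * t k' * inner e (dk k') + t k' * t k' * sq (dk k').
  set s' := s + D.
  have Hpen := pen_ineq a s s'.
  rewrite -/P in Hpen.
  have HpA := Rmult_le_compat_l _ _ _ HA Hpen.
  have Hg : inner g (dk k') = lam * inner e (dk k') by rewrite /g inner_scale_l.
  rewrite Hg => Hm.
  have Htk := Ht k'.
  have HpA' : A * (Rmax 0 (s' - a) * Rmax 0 (s' - a)) <= A * (P * P + 2 * P * D + D * D).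
    by move: HpA; have -> : s' - s = D by rewrite /s'; ring.
  have Hid : t k' * (bk k' - lam * inner e (dk k') + t k' * Q k') =
    t k' * bk k' - k1 / 2 * D + (A * (P * P + 2 * P * D + D * D) - A * (P * P)).
    rewrite /Q /lam /D /=; exact: alg_id.
  have Hs' : - (k1 / 2) * s' = - (k1 / 2) * s - k1 / 2 * D by rewrite /s'; ring.
  have Hkey : 0 <= t k' * (bk k' - lam * inner e (dk k') + t k' * Q k').
    rewrite Hid. simpl in Hfy. lra.
  have := Rmult_le_reg_l _ 0 _ Htk ltac:(rewrite Rmult_0_r; exact Hkey).
  lra.
lra.
Qed.

Lemma cv_rmax (u : nat -> R) l a : Un_cv u l -> Un_cv (fun k => Rmax 0 (u k - a)) (Rmax 0 (l - a)).
Proof.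
move=> H eps He; case: (H eps He) => N HN; exists N => k Hk.
have := HN k Hk; rewrite /R_dist => h.
have [h1 h2] := Rabs_def2 _ _ h.
apply: Rabs_def1; rewrite /Rmax; case: Rle_dec => H1; case: Rle_dec => H2; lra.
Qed.

Lemma hfun_cv n k1 A a (xb : vec n) (yk : nat -> vec n) y : (forall i, Un_cv (fun k => yk k i) (y i)) ->
  Un_cv (fun k => hfun k1 A a xb (yk k)) (hfun k1 A a xb y).
Proof.
move=> H; have Hs := @sq_cv n _ _ xb H.
have Hm := @cv_rmax _ _ a Hs.
rewrite /hfun; apply: CV_plus; first by apply: CV_mult => //; apply: cv_const.
apply: CV_mult; first exact: cv_const.
exact: CV_mult.
Qed.

Lemma Rmax0_ge x : 0 <= Rmax 0 x.
Proof. rewrite /Rmax; case: Rle_dec; lra. Qed.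
Lemma Rmax0_pos x : 0 <= x -> Rmax 0 x = x.
Proof. rewrite /Rmax; case: Rle_dec; lra. Qed.
Lemma Rmax0_neg x : x <= 0 -> Rmax 0 x = 0.
Proof. rewrite /Rmax; case: Rle_dec; lra. Qed.
Lemma Rmax0_le x b : x <= b -> 0 <= b -> Rmax 0 x <= b.
Proof. rewrite /Rmax; case: Rle_dec; lra. Qed.

Lemma bad_to_sub n (f : vec n -> ereal) (xb : vec n) fb L d2 ka k1 (x : vec n) fx :
  (forall x, f x <> EMInf) -> lsc f -> f xb = EFin fb -> 0 <= L -> 0 < ka -> ka < k1 ->
  (forall y fy, sq (vsub y xb) < d2 -> f y = EFin fy -> fb - L * sq (vsub y xb) <= fy) ->
  f x = EFin fx -> 0 < sq (vsub x xb) -> 2 * sq (vsub x xb) < d2 ->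
  fx < fb + ka / 2 * sq (vsub x xb) ->
  exists u lam, 0 < sq (vsub u xb) <= 2 * sq (vsub x xb) /\
    k1 - 4 * (2 * L + k1 + 1) <= lam <= k1 /\ subdiff f u (vscale lam (vsub u xb)).
Proof.
move=> Hprop Hlsc Hfb HL Hka Hk1 HLB Hfx Ha Had Hbad.
remember (sq (vsub x xb)) as a eqn:Ea.
set A := (2 * L + k1 + 1) / a.
have HAa : A * a = 2 * L + k1 + 1 by rewrite /A; field; lra.
have HA : 0 <= A by rewrite /A; apply: Rmult_le_pos; [lra| apply: Rlt_le; apply: Rinv_0_lt_compat; lra].
have Hmin := @min_exists n f (hfun k1 A a xb) xb (2 * a) (fb - (L + k1 / 2) * (2 * a)) Hprop Hlsc
  (fun yk y H => @hfun_cv n k1 A a xb yk y H).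
have [u [fu [Hsu [Hfu Hm]]]] : exists u fu, sq (vsub u xb) <= 2 * a /\ f u = EFin fu /\
    forall y fy, sq (vsub y xb) <= 2 * a -> f y = EFin fy -> fu + hfun k1 A a xb u <= fy + hfun k1 A a xb y.
  apply: Hmin; last by exists x, fx; split; [lra | exact Hfx].
  move=> y fy Hy Hfy.
  have := HLB y fy ltac:(lra) Hfy.
  have := sq_ge0 (vsub y xb).
  have : 0 <= A * (Rmax 0 (sq (vsub y xb) - a) * Rmax 0 (sq (vsub y xb) - a)).
    apply: Rmult_le_pos => //; apply: Rle_0_sqr.
  rewrite /hfun => h1 h2 h3.
  have : (L + k1 / 2) * sq (vsub y xb) <= (L + k1 / 2) * (2 * a) by apply: Rmult_le_compat_l; lra.
  nra.
have Hux := Hm x fx ltac:(lra) Hfx.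
have Hhx : hfun k1 A a xb x = - (k1 / 2) * a by rewrite /hfun -Ea Rminus_diag_eq // Rmax0_pos; [ring|lra].
rewrite Hhx in Hux.
have Hsu0 := sq_ge0 (vsub u xb).
have Hflb := HLB u fu ltac:(lra) Hfu.
have Hpos : 0 < sq (vsub u xb).
  case: (Rle_lt_or_eq_dec _ _ Hsu0) => // Heq.
  exfalso. rewrite -Heq in Hflb.
  move: Hux; rewrite /hfun -Heq Rmax0_neg; last lra.
  move=> Hux. nra.
have Hlt : sq (vsub u xb) < 2 * a.
  case: (Rle_lt_or_eq_dec _ _ Hsu) => // Heq.
  exfalso. rewrite Heq in Hflb.
  move: Hux; rewrite /hfun Heq Rmax0_pos; last lra.
  have -> : 2 * a - a = a by ring.
  have -> : A * (a * a) = (A * a) * a by ring.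
  rewrite HAa => Hux. nra.
have Hsub := @fermat n f xb k1 A a (2 * a) u fu Hprop HA Hfu Hlt Hm.
eexists u, _; split; first by split; lra.
split; last exact: Hsub.
have h0 := Rmax0_ge (sq (vsub u xb) - a).
have h1 := @Rmax0_le (sq (vsub u xb) - a) a ltac:(lra) ltac:(lra).
have : A * Rmax 0 (sq (vsub u xb) - a) <= A * a by apply: Rmult_le_compat_l.
have : 0 <= A * Rmax 0 (sq (vsub u xb) - a) by apply: Rmult_le_pos.
lra.
Qed.

Lemma vnorm_sqrt n (u : vec n) : vnorm u = sqrt (sq u).
Proof. by []. Qed.

Lemma sq0_eq n (y xb : vec n) : sq (vsub y xb) = 0 -> y = xb.
Proof.
move=> H; apply: functional_extensionality => i.
have := inner_eq0 _ H i; rewrite /vsub; lra.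
Qed.

Lemma prox_LB n (f : vec n -> ereal) xb fb M d :
  f xb = EFin fb -> 0 < d ->
  (forall x, 0 < vnorm (vsub x xb) < d ->
      ele (eaddr (f xb) (inner (@vzero n) (vsub x xb) + M * (vnorm (vsub x xb))^2)) (f x)) ->
  forall y fy, sq (vsub y xb) < d * d -> f y = EFin fy -> fb - Rabs M * sq (vsub y xb) <= fy.
Proof.
move=> Hfb Hd Hp y fy Hy Hfy.
have Hs0 := sq_ge0 (vsub y xb).
case: (Rle_lt_or_eq_dec _ _ Hs0) => Hs.
- have Hn : 0 < vnorm (vsub y xb) < d.
    rewrite vnorm_sqrt; split; first exact: sqrt_lt_R0.
    rewrite -(sqrt_square d); last lra.
    apply: sqrt_lt_1_alt; lra.
  have := Hp y Hn; rewrite Hfb Hfy inner_zero_l vnorm_sq -/(sq (vsub y xb)) => h2.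
  have h1 : - Rabs M <= M by have := Rle_abs (- M); rewrite Rabs_Ropp; lra.
  simpl in h2.
  have : - Rabs M * sq (vsub y xb) <= M * sq (vsub y xb) by apply: Rmult_le_compat_r; lra.
  lra.
- rewrite -Hs in Hy *.
  have E := @sq0_eq n y xb (esym Hs); rewrite E Hfb in Hfy; case: Hfy => ->; lra.
Qed.

Lemma exist_u n (f : vec n -> ereal) (xb : vec n) fb L d ka k1 :
  (forall x, f x <> EMInf) -> lsc f -> f xb = EFin fb -> 0 <= L -> 0 < ka -> ka < k1 -> 0 < d ->
  (forall y fy, sq (vsub y xb) < d * d -> f y = EFin fy -> fb - L * sq (vsub y xb) <= fy) ->
  (forall g, 0 < g -> exists x, vnorm (vsub x xb) <= g /\
       ~ ele (eaddr (f xb) (ka / 2 * (vnorm (vsub x xb))^2)) (f x)) ->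
  forall g, 0 < g -> exists u lam, 0 < sq (vsub u xb) < g /\
    k1 - 4 * (2 * L + k1 + 1) <= lam <= k1 /\ subdiff f u (vscale lam (vsub u xb)).
Proof.
move=> Hprop Hlsc Hfb HL Hka Hk1 Hd HLB Hbad g Hg.
have Hm : 0 < Rmin g (d * d) by apply: Rmin_glb_lt => //; apply: Rmult_lt_0_compat.
have Hmd : Rmin g (d * d) <= d * d by apply: Rmin_r.
have Hmg : Rmin g (d * d) <= g by apply: Rmin_l.
move: Hm Hmd Hmg; move: (Rmin g (d * d)) => m Hm Hmd Hmg.
have Hm4 : 0 <= m / 4 by lra.
have [x [Hx1 Hx2]] := Hbad (sqrt (m / 4)) (sqrt_lt_R0 (m / 4) ltac:(lra)).
have Hsx : sq (vsub x xb) <= m / 4.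
  rewrite /sq -vnorm_sq -(pow2_sqrt (m / 4)) //.
  apply: pow_incr; split => //; exact: vnorm_ge0.
move: Hx2; rewrite Hfb vnorm_sq -/(sq (vsub x xb)).
move: (Hprop x); case Efx: (f x) => [fx| |] //= _ Hnle.
have Hlt : fx < fb + ka / 2 * sq (vsub x xb) by lra.
have Hpos : 0 < sq (vsub x xb).
  have Hs0 := sq_ge0 (vsub x xb).
  case: (Rle_lt_or_eq_dec _ _ Hs0) => // Hs.
  have Hxd : sq (vsub x xb) < d * d by apply: (Rle_lt_trans _ (m / 4)); [exact Hsx | lra].
  have := HLB x fx Hxd Efx; rewrite -Hs in Hlt *; lra.
have H2x : 2 * sq (vsub x xb) < d * d.
  have : 2 * sq (vsub x xb) <= 2 * (m / 4) by apply: Rmult_le_compat_l; [lra | exact Hsx].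
  lra.
have [u [lam [H1 [H2 H3]]]] := @bad_to_sub n f xb fb L (d * d) ka k1 x fx Hprop Hlsc Hfb HL Hka Hk1 HLB Efx Hpos H2x Hlt.
exists u, lam; split => //.
have : 2 * sq (vsub x xb) <= 2 * (m / 4) by apply: Rmult_le_compat_l; [lra | exact Hsx].
lra.
Qed.

Definition recseq {A : Type} (a0 : A) (step : nat -> A -> A) : nat -> A :=
  fix g k := match k with 0%nat => a0 | S k' => step k' (g k') end.

Lemma dec_mono (t : nat -> R) : (forall k, t (S k) <= t k) -> forall m k, (m <= k)%coq_nat -> t k <= t m.
Proof.
move=> H m k Hmk; elim: k Hmk => [|k IH] Hmk; first by (have -> : m = 0%nat by lia); lra.
case: (Nat.eq_dec m (S k)) => [->|Hne]; first lra.
have := IH ltac:(lia); have := H k; lra.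
Qed.

Lemma sq_scale n a (e : vec n) : sq (vscale a e) = a * a * sq e.
Proof. rewrite /sq inner_scale_l inner_scale_r; ring. Qed.

Lemma part1 n (f : vec n -> ereal) (xb : vec n) (c : R) :
  Defs.proper f -> lsc f -> in_dom f xb ->
  prox_subdiff f xb (@vzero n) ->
  0 < c ->
  (forall w z, dom_gderiv_subdiff f xb (@vzero n) w ->
     gderiv_subdiff f xb (@vzero n) w z ->
     c * (vnorm w)^2 <= inner z w) ->
  (forall kappa, 0 < kappa < c -> strong_local_min f xb kappa).
Proof.
move=> Hp Hl [fb Hfb] [_ [M [d [Hd Hprox]]]] Hc Hyp ka [Hka Hkc].
have Hprop : forall x, f x <> EMInf := Hp.1.
have HLB := @prox_LB n f xb fb M d Hfb Hd Hprox.
split => //; split; first by exists fb.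
apply: NNPP => Hno.
have Hbad : forall g, 0 < g -> exists x, vnorm (vsub x xb) <= g /\
       ~ ele (eaddr (f xb) (ka / 2 * (vnorm (vsub x xb))^2)) (f x).
  move=> g Hg; apply: NNPP => H; apply: Hno; exists g; split => // x Hx; apply: NNPP => Hx2; apply: H; exists x; split => //.
set k1 := (ka + c) / 2.
have Hk1 : ka < k1 by rewrite /k1; lra.
have Hk1c : k1 < c by rewrite /k1; lra.
have Hex := @exist_u n f xb fb (Rabs M) d ka k1 Hprop Hl Hfb (Rabs_pos M) Hka Hk1 Hd HLB Hbad.
set lmin := k1 - 4 * (2 * Rabs M + k1 + 1).
have pickP : forall g : R, exists p : vec n * R, 0 < g -> (0 < sq (vsub p.1 xb) < g /\ lmin <= p.2 <= k1 /\ subdiff f p.1 (vscale p.2 (vsub p.1 xb))).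
  move=> g; case: (Rlt_dec 0 g) => Hg.
  - have [u [lam H]] := Hex g Hg; by exists (u, lam).
  - by exists (xb, 0).
pose pick g := proj1_sig (constructive_indefinite_description _ (pickP g)).
have Hpick : forall g, 0 < g -> (0 < sq (vsub (pick g).1 xb) < g /\ lmin <= (pick g).2 <= k1 /\ subdiff f (pick g).1 (vscale (pick g).2 (vsub (pick g).1 xb))).
  move=> g; exact: (proj2_sig (constructive_indefinite_description _ (pickP g))).
pose seqp := recseq (pick 1) (fun k p => pick (Rmin (sq (vsub p.1 xb)) (/ INR (S (S k))))).
pose u k := (seqp k).1. pose lam k := (seqp k).2.
have Hseq : forall k, (0 < sq (vsub (u k) xb) < / INR (S k) /\ lmin <= lam k <= k1 /\ subdiff f (u k) (vscale (lam k) (vsub (u k) xb)))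
    /\ sq (vsub (u (S k)) xb) < sq (vsub (u k) xb).
  have Hg : forall k, 0 < sq (vsub (u k) xb) -> 0 < Rmin (sq (vsub (u k) xb)) (/ INR (S (S k))).
    move=> k Hk; apply: Rmin_glb_lt => //; apply: Rinv_0_lt_compat; apply: lt_0_INR; lia.
  have Hstep : forall k, 0 < sq (vsub (u k) xb) -> 
      (0 < sq (vsub (u (S k)) xb) < / INR (S (S k)) /\ lmin <= lam (S k) <= k1 /\ subdiff f (u (S k)) (vscale (lam (S k)) (vsub (u (S k)) xb)))
      /\ sq (vsub (u (S k)) xb) < sq (vsub (u k) xb).
    move=> k Hk.
    have h1 := Rmin_l (sq (vsub (u k) xb)) (/ INR (S (S k))).
    have h2 := Rmin_r (sq (vsub (u k) xb)) (/ INR (S (S k))).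
    have Hgk := Hg k Hk.
    move: h1 h2 Hgk; move Eg: (Rmin (sq (vsub (u k) xb)) (/ INR (S (S k)))) => g h1 h2 Hgk.
    have Eu : u (S k) = (pick g).1 by rewrite -Eg.
    have El : lam (S k) = (pick g).2 by rewrite -Eg.
    rewrite Eu El. have [[H1 H2] H3] := Hpick g Hgk.
    split; last lra. split; first lra. exact: H3.
  have H0 : 0 < sq (vsub (u 0%nat) xb) < / INR 1 /\ lmin <= lam 0%nat <= k1 /\ subdiff f (u 0%nat) (vscale (lam 0%nat) (vsub (u 0%nat) xb)).
    rewrite [INR 1]/= Rinv_1; exact: (Hpick 1 Rlt_0_1).
  have Hall : forall k, 0 < sq (vsub (u k) xb) < / INR (S k) /\ lmin <= lam k <= k1 /\ subdiff f (u k) (vscale (lam k) (vsub (u k) xb)).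
    elim => [|k IH] //; exact: (Hstep k IH.1.1).1.
  move=> k; split; first exact: Hall. exact: (Hstep k (Hall k).1.1).2.
pose t k := vnorm (vsub (u k) xb).
have Ht : forall k, 0 < t k by move=> k; rewrite /t vnorm_sqrt; apply: sqrt_lt_R0; exact: (Hseq k).1.1.1.
have Htdec : forall k, t (S k) <= t k by move=> k; rewrite /t !vnorm_sqrt; apply: sqrt_le_1_alt; exact: Rlt_le (Hseq k).2.
have Htcv : Un_cv t 0.
  move=> eps He; have [N HN] := @inv_small (eps * eps) ltac:(nra).
  exists N => k Hk; rewrite /R_dist Rminus_0_r Rabs_right; last exact: Rle_ge (Rlt_le _ _ (Ht k)).
  rewrite /t vnorm_sqrt -(sqrt_square eps); last lra.
  apply: sqrt_lt_1_alt; split; first exact: sq_ge0.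
  have := (Hseq k).1.1.2; have := HN k Hk; lra.
pose w k := vscale (/ t k) (vsub (u k) xb).
have Hw1 : forall k, sq (w k) = 1.
  move=> k; rewrite /w sq_scale /sq -(vnorm_sq (vsub (u k) xb)) -/(t k).
  have := Ht k; move=> h; field; lra.
have Hwb : forall k i, Rabs (w k i) <= 1.
  move=> k i; apply: Rle_trans (coord_le_norm (w k) i) _.
  rewrite vnorm_sqrt Hw1 sqrt_1; lra.
pose F (o : option 'I_n) k := match o with None => lam k | Some i => w k i end.
have HF : forall o k, Rabs (F o k) <= Rabs lmin + Rabs k1 + 1.
  case => [i|] k /=.
  - have := Hwb k i; have := Rabs_pos lmin; have := Rabs_pos k1; lra.
  - have [_ [[h1 h2] _]] := (Hseq k).1; split_Rabs; lra.
have [phi [l [Hphi HL]]] := @BW_fin _ F _ HF.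
pose winf i := l (Some i). pose laminf := l None.
have Htan : gderiv_subdiff f xb (@vzero n) winf (vscale laminf winf).
  exists (fun k => t (phi k)), (fun k => vcat (w (phi k)) (vscale (lam (phi k)) (w (phi k)))).
  split; first by move=> k; apply: Ht.
  split; first by move=> k; apply: (@dec_mono t Htdec); have := Hphi k; lia.
  split; first exact: (@cv_subseq t 0 phi Htcv Hphi).
  split.
    apply: coord_vcv => j; rewrite /vcat; case: (split j) => i.
    - exact: (HL (Some i)).
    - exact: (CV_mult _ _ _ _ (HL None) (HL (Some i))).
  move=> k; rewrite /gph_subdiff.
  have Htk := Ht (phi k).
  have -> : vfst (vadd (vcat xb (@vzero n)) (vscale (t (phi k)) (vcat (w (phi k)) (vscale (lam (phi k)) (w (phi k)))))) = u (phi k).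
    apply: functional_extensionality => j; rewrite /vfst /vadd /vscale !vcat_l /w /vscale /vsub; field; lra.
  have -> : vsnd (vadd (vcat xb (@vzero n)) (vscale (t (phi k)) (vcat (w (phi k)) (vscale (lam (phi k)) (w (phi k)))))) = vscale (lam (phi k)) (vsub (u (phi k)) xb).
    apply: functional_extensionality => j; rewrite /vsnd /vadd /vscale !vcat_r /w /vscale /vsub /vzero; field; lra.
  exact: (Hseq (phi k)).1.2.2.
have := Hyp winf (vscale laminf winf) (ex_intro _ _ Htan) Htan.
rewrite vnorm_sq inner_scale_l -/(sq winf).
have Hsw : sq winf = 1.
  apply: (UL_sequence (fun k => sq (w (phi k)))).
  - exact: (@sqv_cv n (fun k => w (phi k)) winf (fun i => HL (Some i))).
  - apply: (@Un_cv_ext (fun _ => 1)) => [k|]; first by rewrite Hw1.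
    exact: cv_const.
have HLk : laminf <= k1.
  apply: (@Rle_cv_lim (fun k => lam (phi k)) (fun _ => k1)) => [k||].
  - exact: (Hseq (phi k)).1.2.1.2.
  - exact: (HL None).
  - exact: cv_const.
rewrite Hsw; lra.
Qed.

Lemma ele_trans a b c : ele a b -> ele b c -> ele a c.
Proof. case: a => [x| |]; case: b => [y| |]; case: c => [z| |] //=; lra. Qed.

Lemma hyp_of_lb n (f : vec n -> ereal) (xb : vec n) c' :
  (forall e, curv_set f xb e -> ele (EFin c') e) ->
  (forall w z, dom_gderiv_subdiff f xb (@vzero n) w ->
     gderiv_subdiff f xb (@vzero n) w z ->
     c' * (vnorm w)^2 <= inner z w).
Proof.
move=> Hlb w z Hdom Hg.
have := Hlb (quot z w) (ex_intro _ w (ex_intro _ z (conj Hdom (conj Hg erefl)))).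
rewrite /quot; case: Req_dec_T => Hw /=.
- have Hs : inner w w = 0 by rewrite -vnorm_sq Hw; ring.
  have Hz : inner z w = 0.
    rewrite /inner big1 // => i _; rewrite (inner_eq0 _ Hs i); ring.
  rewrite Hz Hw; lra.
- have Hpos : 0 < vnorm w ^ 2 by have := vnorm_ge0 w; move=> h; apply: pow_lt; lra.
  move=> Hle.
  have := Rmult_le_compat_r _ _ _ (Rlt_le _ _ Hpos) Hle.
  have -> : inner z w / vnorm w ^ 2 * vnorm w ^ 2 = inner z w by field; lra.
  done.
Qed.

Lemma qg_ge n (f : vec n -> ereal) (xb : vec n) c' :
  Defs.proper f -> lsc f -> in_dom f xb -> prox_subdiff f xb (@vzero n) -> 0 < c' ->
  (forall e, curv_set f xb e -> ele (EFin c') e) ->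
  forall ka, 0 < ka < c' -> forall qg, is_sup (QG_set f xb) qg -> ele (EFin ka) qg.
Proof.
move=> Hp Hl Hd Hpx Hc Hlb ka Hka qg [Hs _].
apply: Hs; exists ka; split => //; split; first lra.
exact: (@part1 n f xb c' Hp Hl Hd Hpx Hc (@hyp_of_lb n f xb c' Hlb) ka Hka).
Qed.

Theorem theorem3p2 (n : nat) (f : vec n -> ereal) (xb : vec n) (c : R) :
  Defs.proper f -> lsc f -> in_dom f xb ->
  prox_subdiff f xb (@vzero n) ->
  0 < c ->
  (forall w z, dom_gderiv_subdiff f xb (@vzero n) w ->
     gderiv_subdiff f xb (@vzero n) w z ->
     c * (vnorm w)^2 <= inner z w) ->
  (forall kappa, 0 < kappa < c -> strong_local_min f xb kappa) /\
  (forall qg m, is_sup (QG_set f xb) qg -> is_inf (curv_set f xb) m -> ele m qg).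
Proof.
move=> Hp Hl Hd Hpx Hc Hyp; split; first exact: (@part1 n f xb c Hp Hl Hd Hpx Hc Hyp).
move=> qg m Hsup [Hinf1 Hinf2].
have Hclb : forall e, curv_set f xb e -> ele (EFin c) e.
  move=> e [w [z [Hdom [Hg ->]]]]; rewrite /quot; case: Req_dec_T => Hw //=.
  have := Hyp w z Hdom Hg => Hle.
  have Hpos : 0 < vnorm w ^ 2 by have := vnorm_ge0 w; move=> h; apply: pow_lt; lra.
  apply: (Rmult_le_reg_r _ _ _ Hpos).
  have -> : inner z w / vnorm w ^ 2 * vnorm w ^ 2 = inner z w by field; lra.
  exact: Hle.
have Hcm := Hinf2 (EFin c) Hclb.
move: Hcm; case Em: m => [mu| |] //= Hcm.
-
  have Hk : forall ka, 0 < ka < mu -> ele (EFin ka) qg.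
    move=> ka Hka.
    apply: (@qg_ge n f xb ((ka + mu) / 2) Hp Hl Hd Hpx ltac:(lra)) => //; last lra.
    move=> e He; apply: (@ele_trans _ (EFin mu)); first by rewrite /=; lra.
    by rewrite -Em; apply: Hinf1.
  case Eq: qg => [q| |] //.
  + apply: Rnot_lt_le => Hlt.
    have := Hk ((Rmax q (mu / 2) + mu) / 2).
    rewrite Eq /=; have := Rmax_l q (mu / 2); have := Rmax_r q (mu / 2).
    move=> h1 h2 H.
    have : Rmax q (mu / 2) < mu by rewrite /Rmax; case: Rle_dec; lra.
    move=> h3; have := H ltac:(lra); lra.
  + have := Hk (mu / 2) ltac:(lra); by rewrite Eq.
-
  have Hall : forall c', 0 < c' -> forall e, curv_set f xb e -> ele (EFin c') e.
    move=> c' _ e He; have := Hinf1 e He; rewrite Em; by case: e {He}.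
  case Eq: qg => [q| |] //.
  + have := @qg_ge n f xb (Rabs q + 2) Hp Hl Hd Hpx ltac:(have := Rabs_pos q; lra)
      (Hall (Rabs q + 2) ltac:(have := Rabs_pos q; lra)) (Rabs q + 1) ltac:(have := Rabs_pos q; lra) qg Hsup.
    rewrite Eq /=; have := Rle_abs q; lra.
  + have := @qg_ge n f xb 2 Hp Hl Hd Hpx ltac:(lra) (Hall 2 ltac:(lra)) 1 ltac:(lra) qg Hsup.
    by rewrite Eq.
Qed.
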